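(* Let $V$ and $W$ be two-dimensional inner-product spaces and let $x,y\in V$ be linearly independent. Let $\theta$ be the angle between $x$ and $y$ and $r=|y|/|x|$. There exists a constant $C>0$, depending continuously on $\theta$ and $r$, such that for every $A\in\mathrm{Hom}(V,W)$, \[ \mathrm{dist}^2(A,\mathrm{O}(V,W))\le C\left[\Big(\frac{|Ax|}{|x|}-1\Big)^2+\Big(\frac{|Ay|}{|y|}-1\Big)^2+\Big(\frac{|A(x+y)|}{|x+y|}-1\Big)^2\right]. \]
   Context: $\mathrm{O}(V,W)$ denotes the set of linear isometries $V\to W$. The distance is measured in the Frobenius (Hilbert–Schmidt) norm induced by the inner products on $V$ and $W$. *)

(* Defs.v *)
From HB Require Import structures.
From mathcomp Require Import all_boot all_order all_algebra.
From mathcomp Require Import all_classical all_reals all_analysis.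
Set Implicit Arguments. Unset Strict Implicit. Unset Printing Implicit Defensive.
Import Order.TTheory GRing.Theory Num.Theory.
Import numFieldNormedType.Exports.
Local Open Scope classical_set_scope.
Local Open Scope ring_scope.

(* A two-dimensional inner-product space is modelled (up to isometry) by the
   Euclidean space 'cV[R]_2 with the standard inner product; linear maps
   V -> W are 2x2 matrices acting by A *m x. *)

Definition ip {R : realType} (u v : 'cV[R]_2) : R := (u^T *m v) 0 0.
Definition vnorm {R : realType} (u : 'cV[R]_2) : R := Num.sqrt (ip u u).

Definition lin_indep2 {R : realType} (x y : 'cV[R]_2) : Prop :=
  forall a b : R, a *: x + b *: y = 0 -> a = 0 /\ b = 0.

Definition vangle {R : realType} (x y : 'cV[R]_2) : R :=
  acos (ip x y / (vnorm x * vnorm y)).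

Definition isometries {R : realType} : set 'M[R]_2 :=
  [set Q | forall v : 'cV[R]_2, vnorm (Q *m v) = vnorm v].

Definition frob {R : realType} (M : 'M[R]_2) : R :=
  Num.sqrt (\sum_(i < 2) \sum_(j < 2) M i j ^+ 2).

Definition dist_O {R : realType} (A : 'M[R]_2) : R :=
  inf [set frob (A - Q) | Q in isometries].

(* Main.v *)
Require Import Defs.
From HB Require Import structures.
From mathcomp Require Import all_boot all_order all_algebra.
From mathcomp Require Import all_classical all_reals all_analysis.
From mathcomp Require Import lra ring.
Import Order.TTheory GRing.Theory Num.Theory.
Import numFieldNormedType.Exports.
Local Open Scope classical_set_scope.
Local Open Scope ring_scope.

Section S.
Variable R : realType.

Lemma sum2 (F : 'I_2 -> R) : \sum_(i < 2) F i = F 0 + F 1.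
Proof. rewrite !big_ord_recr big_ord0 /= add0r. by congr (F _ + F _); apply: val_inj. Qed.

Lemma ipE (u v : 'cV[R]_2) : ip u v = u 0 0 * v 0 0 + u 1 0 * v 1 0.
Proof. by rewrite /ip !mxE sum2 !mxE. Qed.

Lemma mulE (A : 'M[R]_2) (v : 'cV[R]_2) i : (A *m v) i 0 = A i 0 * v 0 0 + A i 1 * v 1 0.
Proof. by rewrite !mxE sum2. Qed.

Lemma frobE (M : 'M[R]_2) : frob M = Num.sqrt (M 0 0 ^+ 2 + M 0 1 ^+ 2 + M 1 0 ^+ 2 + M 1 1 ^+ 2).
Proof. by rewrite /frob !sum2 !addrA. Qed.

Lemma vnormE (v : 'cV[R]_2) : vnorm v = Num.sqrt (v 0 0 ^+ 2 + v 1 0 ^+ 2).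
Proof. by rewrite /vnorm ipE !expr2. Qed.

Definition Qm (c s e : R) : 'M[R]_2 :=
  \matrix_(i < 2, j < 2) if i == 0 then (if j == 0 then c else - (e * s)) else (if j == 0 then s else e * c).

Lemma Qm_iso c s e : c ^+ 2 + s ^+ 2 = 1 -> e ^+ 2 = 1 -> isometries (Qm c s e).
Proof.
move=> h1 h2 v; rewrite !vnormE !mulE !mxE /=.
congr Num.sqrt.
set v0 := v 0 0; set v1 := v 1 0.
have -> : (c * v0 + - (e * s) * v1) ^+ 2 + (s * v0 + e * c * v1) ^+ 2
  = (c^+2 + s^+2) * v0 ^+2 + e^+2 * (c^+2 + s^+2) * v1^+2 by ring.
by rewrite h1 h2 !mul1r.
Qed.


Lemma dist_ge0 (A : 'M[R]_2) : 0 <= dist_O A.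
Proof.
apply: lb_le_inf.
  exists (frob (A - 1%:M)); exists 1%:M => // v; by rewrite mul1mx.
by move=> _ [Q _ <-]; rewrite /frob sqrtr_ge0.
Qed.

Lemma dist_le (A Q : 'M[R]_2) : isometries Q -> dist_O A ^+ 2 <= frob (A - Q) ^+ 2.
Proof.
move=> hQ.
have h0 := dist_ge0 A.
have h1 : dist_O A <= frob (A - Q).
  apply: (ge_inf (E := [set frob (A - Q) | Q in isometries])).
    by exists 0 => _ [Q' _ <-]; rewrite /frob sqrtr_ge0.
  by exists Q.
apply: lerXn2r => //; rewrite nnegrE //; exact: sqrtr_ge0.
Qed.

Lemma rot_exists (u v : R) : exists c s, c ^+ 2 + s ^+ 2 = 1 /\ c * u + s * v = Num.sqrt (u ^+ 2 + v ^+ 2).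
Proof.
set m := Num.sqrt (u ^+ 2 + v ^+ 2).
have hm2 : m ^+ 2 = u ^+ 2 + v ^+ 2 by rewrite sqr_sqrtr // addr_ge0 // sqr_ge0.
have hm0 : 0 <= m by rewrite sqrtr_ge0.
have [m0|mn0] := eqVneq m 0.
  exists 1, 0; split; first by rewrite expr1n expr0n addr0.
  rewrite m0 in hm2 *.
  have hu := sqr_ge0 u; have hv := sqr_ge0 v.
  have : u ^+ 2 = 0 by lra.
  move/eqP; rewrite sqrf_eq0 => /eqP ->; by rewrite mul0r mulr0 addr0.
exists (u / m), (v / m); split.
  by rewrite !expr_div_n -mulrDl -hm2 divff // expf_neq0.
have -> : u / m * u + v / m * v = m ^+ 2 / m by rewrite hm2; field.
by rewrite expr2 mulrK // unitfE.
Qed.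

Lemma dist_coord (A : 'M[R]_2) N D :
  N = A 0 0 ^+ 2 + A 0 1 ^+ 2 + A 1 0 ^+ 2 + A 1 1 ^+ 2 ->
  D = A 0 0 * A 1 1 - A 0 1 * A 1 0 ->
  dist_O A ^+ 2 <= N + 2 - 2 * Num.sqrt (N + 2 * `|D|).
Proof.
move=> -> ->.
have [e [he2 heD]] : exists e : R, (e ^+ 2 = 1) /\ (e * (A 0 0 * A 1 1 - A 0 1 * A 1 0) = `|A 0 0 * A 1 1 - A 0 1 * A 1 0|).
  case: (leP 0 (A 0 0 * A 1 1 - A 0 1 * A 1 0)) => h.
    by exists 1; rewrite expr1n mul1r ger0_norm.
  by exists (-1); rewrite sqrrN expr1n mulN1r ltr0_norm.
have [c [s0 [h1 h2]]] := rot_exists (A 0 0 + e * A 1 1) (A 1 0 - e * A 0 1).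
apply: le_trans (dist_le A _ (@Qm_iso c s0 e h1 he2)) _.
rewrite frobE sqr_sqrtr; last by rewrite !addr_ge0 // sqr_ge0.
rewrite !mxE /= -heD.
move: h2 h1 he2; move: (A 0 0) (A 0 1) (A 1 0) (A 1 1) => p q r s h2 h1 he2.
have E1 : (p + e * s) ^+ 2 + (r - e * q) ^+ 2 = 
   p ^+ 2 + q ^+ 2 * e ^+ 2 + r ^+ 2 + s ^+ 2 * e ^+ 2 + 2 * (e * (p * s - q * r)) by ring.
rewrite E1 he2 !mulr1 in h2.
rewrite -h2.
have E2 : (p - c) ^+ 2 + (q - - (e * s0)) ^+ 2 + (r - s0) ^+ 2 + (s - e * c) ^+ 2
   = p ^+ 2 + q ^+ 2 + r ^+ 2 + s ^+ 2 + (c ^+ 2 + s0 ^+ 2) * (1 + e ^+ 2)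
     - 2 * (c * (p + e * s) + s0 * (r - e * q)) by ring.
by rewrite E2 h1 he2 mul1r.
Qed.

End S.

Set Implicit Arguments. Unset Strict Implicit.
Section S3.
Variable R : realType.

Lemma T_sig (a b : R) : 0 <= a -> 0 <= b ->
  (a ^+ 2 + b ^+ 2) + 2 - 2 * (a + b) <=
  (a ^+ 2 + b ^+ 2) ^+ 2 - 2 * (a * b) ^+ 2 - 2 * (a ^+ 2 + b ^+ 2) + 2.
Proof.
move=> ha hb.
have h1 : 0 <= (a - 1) ^+ 2 * (a * (a + 2)) by rewrite mulr_ge0 ?sqr_ge0 ?mulr_ge0 //; lra.
have h2 : 0 <= (b - 1) ^+ 2 * (b * (b + 2)) by rewrite mulr_ge0 ?sqr_ge0 ?mulr_ge0 //; lra.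
have E : (a ^+ 2 + b ^+ 2) ^+ 2 - 2 * (a * b) ^+ 2 - 2 * (a ^+ 2 + b ^+ 2) + 2
  - ((a ^+ 2 + b ^+ 2) + 2 - 2 * (a + b)) = (a - 1) ^+ 2 * (a * (a + 2)) + (b - 1) ^+ 2 * (b * (b + 2)) by ring.
rewrite -subr_ge0 E; lra.
Qed.

Lemma T_le (N d u : R) : 0 <= d -> 2 * d <= N -> 0 <= u -> u ^+ 2 = N + 2 * d ->
  N + 2 - 2 * u <= N ^+ 2 - 2 * d ^+ 2 - 2 * N + 2.
Proof.
move=> hd hN hu hu2.
set t := Num.sqrt (N - 2 * d).
have ht : 0 <= t by rewrite sqrtr_ge0.
have ht2 : t ^+ 2 = N - 2 * d by rewrite sqr_sqrtr // subr_ge0.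
have htu : t <= u.
  rewrite -(ler_sqr (x:=t) (y:=u)) ?nnegrE //; lra.
have ha : 0 <= (u + t) / 2 by rewrite divr_ge0 //; lra.
have hb : 0 <= (u - t) / 2 by rewrite divr_ge0 //; lra.
have := T_sig ha hb.
have E1 : ((u + t) / 2) ^+ 2 + ((u - t) / 2) ^+ 2 = (u ^+ 2 + t ^+ 2) / 2 by field.
have E2 : (u + t) / 2 * ((u - t) / 2) = (u ^+ 2 - t ^+ 2) / 4 by field.
have E3 : (u + t) / 2 + (u - t) / 2 = u by field.
rewrite E1 E2 E3 hu2 ht2.
have -> : (N + 2 * d + (N - 2 * d)) / 2 = N by field.
have -> : (N + 2 * d - (N - 2 * d)) / 4 = d by field.
done.
Qed.

Lemma absM_le (u v U V : R) : `|u| <= U -> `|v| <= V -> `|u * v| <= U * V.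
Proof. move=> h1 h2; rewrite normrM; apply: ler_pM => //; exact: normr_ge0. Qed.

Lemma tri3 (a b c : R) : `|a + b + c| <= `|a| + `|b| + `|c|.
Proof. apply: le_trans (ler_normD _ _) _; rewrite lerD2r; exact: ler_normD. Qed.

Lemma comb_bound (P Qc Rr qx qy B al be L nx ny : R) :
  0 <= nx -> 0 <= ny -> 0 <= al -> 0 <= be -> al + be <= L ->
  `|P| <= ny ^+ 2 -> `|Qc| <= 2 * (nx * ny) -> `|Rr| <= nx ^+ 2 ->
  `|qx| <= al * nx ^+ 2 -> `|qy| <= be * ny ^+ 2 -> `|B| <= L * (nx ^+ 2 + ny ^+ 2) ->
  `|P * qx + Qc * B + Rr * qy| <= L * (nx ^+ 2 * ny ^+ 2 + 2 * (nx * ny) * (nx ^+ 2 + ny ^+ 2)).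
Proof.
move=> hx hy ha hb hL hP hQ hR h1 h2 h3.
apply: le_trans (tri3 _ _ _) _.
have k1 := absM_le hP h1.
have k2 := absM_le hQ h3.
have k3 := absM_le hR h2.
have m0 : 0 <= nx ^+ 2 * ny ^+ 2 by rewrite mulr_ge0 // sqr_ge0.
have k4 : (al + be) * (nx ^+ 2 * ny ^+ 2) <= L * (nx ^+ 2 * ny ^+ 2) by rewrite ler_wpM2r.
have E : ny ^+ 2 * (al * nx ^+ 2) + nx ^+ 2 * (be * ny ^+ 2) = (al + be) * (nx ^+ 2 * ny ^+ 2) by ring.
have E2 : 2 * (nx * ny) * (L * (nx ^+ 2 + ny ^+ 2)) = L * (2 * (nx * ny) * (nx ^+ 2 + ny ^+ 2)) by ring.
rewrite mulrDr; lra.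
Qed.

End S3.

Section S4.
Variable R : realType.

Lemma sq2_eq0 (a b : R) : a ^+ 2 + b ^+ 2 = 0 -> a = 0 /\ b = 0.
Proof.
move=> h; have ha := sqr_ge0 a; have hb := sqr_ge0 b.
have h1 : a ^+ 2 = 0 by lra.
have h2 : b ^+ 2 = 0 by lra.
by move/eqP: h1; rewrite sqrf_eq0 => /eqP; move/eqP: h2; rewrite sqrf_eq0 => /eqP.
Qed.

Lemma sq2_gt0 (a b : R) : (a != 0) || (b != 0) -> 0 < a ^+ 2 + b ^+ 2.
Proof.
move=> h; rewrite lt_def addr_ge0 ?sqr_ge0 // andbT.
apply/eqP => /sq2_eq0 [ha hb]; move: h; by rewrite ha hb eqxx.
Qed.

Lemma abs_le_sqrt1 (a b : R) : `|a| <= Num.sqrt (a ^+ 2 + b ^+ 2).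
Proof. rewrite -sqrtr_sqr ler_sqrt ?addr_ge0 ?sqr_ge0 // lerDl sqr_ge0 //. Qed.

Lemma abs_le_sqrt2 (a b : R) : `|b| <= Num.sqrt (a ^+ 2 + b ^+ 2).
Proof. by rewrite addrC abs_le_sqrt1. Qed.

Lemma qv_eq (v1 v2 p q r s nv av : R) : nv = Num.sqrt (v1 ^+ 2 + v2 ^+ 2) -> 0 < nv ->
  av = Num.sqrt ((p * v1 + q * v2) ^+ 2 + (r * v1 + s * v2) ^+ 2) ->
  `|(p * v1 + q * v2) ^+ 2 + (r * v1 + s * v2) ^+ 2 - (v1 ^+ 2 + v2 ^+ 2)|
   = `|(av / nv) ^+ 2 - 1| * nv ^+ 2.
Proof.
move=> hn hpos ha.
have e1 : nv ^+ 2 = v1 ^+ 2 + v2 ^+ 2 by rewrite hn sqr_sqrtr // addr_ge0 // sqr_ge0.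
have e2 : av ^+ 2 = (p * v1 + q * v2) ^+ 2 + (r * v1 + s * v2) ^+ 2 by rewrite ha sqr_sqrtr // addr_ge0 // sqr_ge0.
rewrite -e1 -e2 -[nv ^+ 2]ger0_norm ?sqr_ge0 // -normrM; congr `|_|.
rewrite mulrBl mul1r; congr (_ - _).
  by rewrite expr_div_n mulfVK // ?expf_neq0 // ?gt_eqF //.
by rewrite ger0_norm // sqr_ge0.
Qed.

Lemma dev_small (a : R) : 0 <= a -> (a - 1) ^+ 2 <= 1 -> `|a ^+ 2 - 1| <= 3 * `|a - 1|.
Proof.
move=> ha h.
have h2 : a <= 2 by nra.
have -> : a ^+ 2 - 1 = (a - 1) * (a + 1) by ring.
rewrite normrM mulrC (ger0_norm (x := a + 1)); last lra.
apply: ler_wpM2r; [exact: normr_ge0 | lra].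
Qed.

Lemma dev_big (a : R) : `|a ^+ 2 - 1| <= 2 * (a - 1) ^+ 2 + 3.
Proof.
apply: le_trans (ler_normB _ _) _.
rewrite normr1 ger0_norm ?sqr_ge0 //.
have := sqr_ge0 (a - 2).
have -> : (a - 2) ^+ 2 = 2 * (a - 1) ^+ 2 + 2 - a ^+ 2 by ring.
lra.
Qed.

Lemma sq_le_of_abs (e M : R) : `|e| <= M -> e ^+ 2 <= M ^+ 2.
Proof.
move=> h; rewrite -(real_normK (num_real e)).
apply: lerXn2r; rewrite ?nnegrE ?normr_ge0 //; exact: le_trans (normr_ge0 _) h.
Qed.

Lemma le3_1 (u v w : R) : 0 <= v -> 0 <= w -> u <= u + v + w. Proof. move=> *; lra. Qed.
Lemma le3_2 (u v w : R) : 0 <= u -> 0 <= w -> v <= u + v + w. Proof. move=> *; lra. Qed.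
Lemma le3_3 (u v w : R) : 0 <= u -> 0 <= v -> w <= u + v + w. Proof. move=> *; lra. Qed.
Lemma lin_L3 (al be ga u v w : R) : al <= 3 * u -> be <= 3 * v -> ga <= 3 * w ->
  al + be + ga <= 3 * (u + v + w). Proof. move=> *; lra. Qed.
Lemma lin_L11 (al be ga u v w : R) : al <= 2 * u + 3 -> be <= 2 * v + 3 -> ga <= 2 * w + 3 ->
  1 <= u + v + w -> al + be + ga <= 11 * (u + v + w). Proof. move=> *; lra. Qed.
Lemma lin_fin1 (T a b c X Y Z : R) : T <= a + 2 * b + c -> a <= X -> b <= X -> c <= X ->
  X <= Y -> 0 <= Z - 4 * Y -> T <= Z. Proof. move=> *; lra. Qed.
Lemma lin_fin2 (T a c X Y Z S : R) : T <= a + c + 4 -> a <= X -> c <= X -> X <= Y ->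
  1 <= S -> 0 <= Z - 2 * Y - 4 * S -> T <= Z. Proof. move=> *; lra. Qed.

Lemma abs2_le (x N : R) : 0 <= N - 2 * x -> 0 <= N + 2 * x -> 2 * `|x| <= N.
Proof. move=> h1 h2; have [hd|hd] := leP 0 x; [rewrite ger0_norm // | rewrite ltr0_norm //]; lra. Qed.
Lemma ck1 (K : R) : 0 <= K -> 0 <= 200 * (1 + K) ^+ 2 - 108 * K ^+ 2.
Proof.
move=> h; have -> : 200 * (1 + K) ^+ 2 - 108 * K ^+ 2 = 200 + 400 * K + 92 * K ^+ 2 by ring.
have := sqr_ge0 K; lra.
Qed.
Lemma ck2 (K : R) : 0 <= K -> 0 <= 200 * (1 + K) ^+ 2 - (22 * K + 4).
Proof.
move=> h; have -> : 200 * (1 + K) ^+ 2 - (22 * K + 4) = 196 + 378 * K + 200 * K ^+ 2 by ring.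
have := sqr_ge0 K; lra.
Qed.
Lemma t2 (Nn e11 e22 u : R) : Nn = e11 + e22 + 2 -> 0 <= u -> Nn + 2 - 2 * u <= e11 + e22 + 4.
Proof. move=> *; lra. Qed.

End S4.

Section S5.
Variable R : realType.

Lemma main_real (x1 x2 y1 y2 p q r s nx ny nz ax ay az K : R) :
  x1 * y2 - x2 * y1 != 0 ->
  nx = Num.sqrt (x1 ^+ 2 + x2 ^+ 2) -> ny = Num.sqrt (y1 ^+ 2 + y2 ^+ 2) ->
  nz = Num.sqrt ((x1 + y1) ^+ 2 + (x2 + y2) ^+ 2) ->
  ax = Num.sqrt ((p * x1 + q * x2) ^+ 2 + (r * x1 + s * x2) ^+ 2) ->
  ay = Num.sqrt ((p * y1 + q * y2) ^+ 2 + (r * y1 + s * y2) ^+ 2) ->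
  az = Num.sqrt ((p * (x1 + y1) + q * (x2 + y2)) ^+ 2 + (r * (x1 + y1) + s * (x2 + y2)) ^+ 2) ->
  K = (1 + 2 * (ny / nx) + 2 / (ny / nx)) / (1 - ((x1 * y1 + x2 * y2) / (nx * ny)) ^+ 2) ->
  p ^+ 2 + q ^+ 2 + r ^+ 2 + s ^+ 2 + 2
    - 2 * Num.sqrt (p ^+ 2 + q ^+ 2 + r ^+ 2 + s ^+ 2 + 2 * `|p * s - q * r|)
  <= 200 * (1 + K) ^+ 2 * ((ax / nx - 1) ^+ 2 + (ay / ny - 1) ^+ 2 + (az / nz - 1) ^+ 2).
Proof.
move=> hD hnx hny hnz hax hay haz hK.
have hx0 : 0 < x1 ^+ 2 + x2 ^+ 2.
  apply: sq2_gt0; have [h1|h1] := eqVneq x1 0; last by apply/orP; left.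
  have [h2|h2] := eqVneq x2 0; last by apply/orP; right.
  by move: hD; rewrite h1 h2 !mul0r subrr eqxx.
have hy0 : 0 < y1 ^+ 2 + y2 ^+ 2.
  apply: sq2_gt0; have [h1|h1] := eqVneq y1 0; last by apply/orP; left.
  have [h2|h2] := eqVneq y2 0; last by apply/orP; right.
  by move: hD; rewrite h1 h2 !mulr0 subrr eqxx.
have hz0 : 0 < (x1 + y1) ^+ 2 + (x2 + y2) ^+ 2.
  apply: sq2_gt0; have [h1|h1] := eqVneq (x1 + y1) 0; last by apply/orP; left.
  have [h2|h2] := eqVneq (x2 + y2) 0; last by apply/orP; right.
  have e1 : y1 = - x1 by lra.
  have e2 : y2 = - x2 by lra.
  have : x1 * y2 - x2 * y1 = 0 by rewrite e1 e2; ring.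
  by move=> h; move: hD; rewrite h eqxx.
have nxp : 0 < nx by rewrite hnx sqrtr_gt0.
have nyp : 0 < ny by rewrite hny sqrtr_gt0.
have nzp : 0 < nz by rewrite hnz sqrtr_gt0.
have nx2 : nx ^+ 2 = x1 ^+ 2 + x2 ^+ 2 by rewrite hnx sqr_sqrtr // ltW.
have ny2 : ny ^+ 2 = y1 ^+ 2 + y2 ^+ 2 by rewrite hny sqr_sqrtr // ltW.
have nz2 : nz ^+ 2 = (x1 + y1) ^+ 2 + (x2 + y2) ^+ 2 by rewrite hnz sqr_sqrtr // ltW.
set al := `|(ax / nx) ^+ 2 - 1|.
set be := `|(ay / ny) ^+ 2 - 1|.
set ga := `|(az / nz) ^+ 2 - 1|.
set L := al + be + ga.
have hqx := qv_eq hnx nxp hax.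
have hqy := qv_eq hny nyp hay.
have hqz := qv_eq hnz nzp haz.
move: hqx hqy hqz.
set qx := (p * x1 + q * x2) ^+ 2 + (r * x1 + s * x2) ^+ 2 - (x1 ^+ 2 + x2 ^+ 2).
set qy := (p * y1 + q * y2) ^+ 2 + (r * y1 + s * y2) ^+ 2 - (y1 ^+ 2 + y2 ^+ 2).
set qz := (p * (x1 + y1) + q * (x2 + y2)) ^+ 2 + (r * (x1 + y1) + s * (x2 + y2)) ^+ 2
   - ((x1 + y1) ^+ 2 + (x2 + y2) ^+ 2).
move=> hqx hqy hqz.
rewrite -/al in hqx; rewrite -/be in hqy; rewrite -/ga in hqz.
set e11 := p ^+ 2 + r ^+ 2 - 1.
set e12 := p * q + r * s.
set e22 := q ^+ 2 + s ^+ 2 - 1.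
set B := e11 * x1 * y1 + e12 * (x1 * y2 + x2 * y1) + e22 * x2 * y2.
have h2B : 2 * B = qz - qx - qy by rewrite /B /qz /qx /qy /e11 /e12 /e22; ring.
have al0 : 0 <= al by apply: normr_ge0.
have be0 : 0 <= be by apply: normr_ge0.
have ga0 : 0 <= ga by apply: normr_ge0.
have hnz2 : nz ^+ 2 <= 2 * nx ^+ 2 + 2 * ny ^+ 2.
  rewrite nz2 nx2 ny2.
  have := sqr_ge0 (x1 - y1); have := sqr_ge0 (x2 - y2).
  have -> : 2 * (x1 ^+ 2 + x2 ^+ 2) + 2 * (y1 ^+ 2 + y2 ^+ 2) =
     (x1 + y1) ^+ 2 + (x2 + y2) ^+ 2 + ((x1 - y1) ^+ 2 + (x2 - y2) ^+ 2) by ring.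
  lra.
have hB : `|B| <= L * (nx ^+ 2 + ny ^+ 2).
  have h1 : `|2 * B| <= `|qz| + `|qx| + `|qy|.
    by rewrite h2B; apply: le_trans (tri3 qz (- qx) (- qy)) _; rewrite !normrN.
  rewrite normrM ger0_norm // hqx hqy hqz in h1.
  have h3 : ga * nz ^+ 2 <= ga * (2 * nx ^+ 2 + 2 * ny ^+ 2) by rewrite ler_wpM2l.
  have k1 : 0 <= al * ny ^+ 2 by rewrite mulr_ge0 // sqr_ge0.
  have k2 : 0 <= be * nx ^+ 2 by rewrite mulr_ge0 // sqr_ge0.
  have k3 : 0 <= al * nx ^+ 2 by rewrite mulr_ge0 // sqr_ge0.
  have k4 : 0 <= be * ny ^+ 2 by rewrite mulr_ge0 // sqr_ge0.
  have E1 : ga * (2 * nx ^+ 2 + 2 * ny ^+ 2) = 2 * (ga * nx ^+ 2) + 2 * (ga * ny ^+ 2) by ring.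
  have E2 : L * (nx ^+ 2 + ny ^+ 2) = al * nx ^+ 2 + al * ny ^+ 2 + be * nx ^+ 2 + be * ny ^+ 2
     + ga * nx ^+ 2 + ga * ny ^+ 2 by rewrite /L; ring.
  rewrite E2; lra.
have bx1 : `|x1| <= nx by rewrite hnx abs_le_sqrt1.
have bx2 : `|x2| <= nx by rewrite hnx abs_le_sqrt2.
have by1 : `|y1| <= ny by rewrite hny abs_le_sqrt1.
have by2 : `|y2| <= ny by rewrite hny abs_le_sqrt2.
have hsq : forall u n : R, `|u| <= n -> `|u ^+ 2| <= n ^+ 2.
  by move=> u n h; rewrite !expr2; exact: absM_le.
have hm2 : forall u v U V : R, `|u| <= U -> `|v| <= V -> `|-2 * (u * v)| <= 2 * (U * V).
  move=> u v U V h1 h2; rewrite normrM normrN normr_nat.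
  by rewrite ler_wpM2l // absM_le.
have hmn : forall u v U V : R, `|u| <= U -> `|v| <= V -> `|- (u * v)| <= U * V.
  by move=> u v U V h1 h2; rewrite normrN absM_le.
have hL : al + be <= L by rewrite /L lerDl.
set Dl := x1 * y2 - x2 * y1.
set W := L * (nx ^+ 2 * ny ^+ 2 + 2 * (nx * ny) * (nx ^+ 2 + ny ^+ 2)).
have hE11 : Dl ^+ 2 * e11 = y2 ^+ 2 * qx + (-2 * (x2 * y2)) * B + x2 ^+ 2 * qy.
  by rewrite /Dl /B /qx /qy /e11 /e12 /e22; ring.
have hE12 : Dl ^+ 2 * e12 = (- (y1 * y2)) * qx + (x1 * y2 + x2 * y1) * B + (- (x1 * x2)) * qy.
  by rewrite /Dl /B /qx /qy /e11 /e12 /e22; ring.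
have hE22 : Dl ^+ 2 * e22 = y1 ^+ 2 * qx + (-2 * (x1 * y1)) * B + x1 ^+ 2 * qy.
  by rewrite /Dl /B /qx /qy /e11 /e12 /e22; ring.
have nx0 := ltW nxp; have ny0 := ltW nyp; have nz0 := ltW nzp.
have hqx' : `|qx| <= al * nx ^+ 2 by rewrite hqx.
have hqy' : `|qy| <= be * ny ^+ 2 by rewrite hqy.
have b11 : `|Dl ^+ 2 * e11| <= W.
  rewrite hE11; exact: (comb_bound nx0 ny0 al0 be0 hL (hsq _ _ by2) (hm2 _ _ _ _ bx2 by2) (hsq _ _ bx2) hqx' hqy' hB).
have b22 : `|Dl ^+ 2 * e22| <= W.
  rewrite hE22; exact: (comb_bound nx0 ny0 al0 be0 hL (hsq _ _ by1) (hm2 _ _ _ _ bx1 by1) (hsq _ _ bx1) hqx' hqy' hB).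
have b12 : `|Dl ^+ 2 * e12| <= W.
  rewrite hE12; apply: (comb_bound nx0 ny0 al0 be0 hL _ _ _ hqx' hqy' hB).
  - by rewrite expr2; exact: hmn.
  - apply: le_trans (ler_normD _ _) _.
    have -> : 2 * (nx * ny) = nx * ny + nx * ny by ring.
    by apply: lerD; apply: absM_le.
  - by rewrite expr2; exact: hmn.
have Dl0 : 0 < Dl ^+ 2 by rewrite exprn_even_gt0.
have hM : (nx * ny) ^+ 2 = (x1 ^+ 2 + x2 ^+ 2) * (y1 ^+ 2 + y2 ^+ 2) by rewrite exprMn nx2 ny2.
have nxy0 : nx * ny != 0 by rewrite mulf_neq0 // gt_eqF.
have nx0' : nx != 0 by rewrite gt_eqF.
have ny0' : ny != 0 by rewrite gt_eqF.
have ht : 1 - ((x1 * y1 + x2 * y2) / (nx * ny)) ^+ 2 = Dl ^+ 2 / (nx * ny) ^+ 2.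
  have -> : 1 - ((x1 * y1 + x2 * y2) / (nx * ny)) ^+ 2
      = ((nx * ny) ^+ 2 - (x1 * y1 + x2 * y2) ^+ 2) / (nx * ny) ^+ 2.
    by field; rewrite ny0' nx0'.
  congr (_ / _); rewrite exprMn nx2 ny2 /Dl; ring.
have Dl0' : Dl != 0 by [].
have hWK : W / Dl ^+ 2 = L * K.
  rewrite hK ht /W; field.
  by rewrite Dl0' nx0' ny0'.
have K0 : 0 <= K.
  rewrite hK ht; apply: divr_ge0; last exact: ltW (divr_gt0 Dl0 (exprn_gt0 _ (mulr_gt0 nxp nyp))).
  have hr : 0 <= ny / nx := divr_ge0 ny0 nx0.
  have h2 : 0 <= 2 :> R := ler0n _ 2.
  apply: addr_ge0; [apply: addr_ge0; [exact: ler01 | exact: mulr_ge0 h2 hr] | exact: divr_ge0 h2 hr].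
have fromb : forall e, `|Dl ^+ 2 * e| <= W -> `|e| <= L * K.
  move=> e h; rewrite -hWK ler_pdivlMr // mulrC.
  by rewrite normrM (ger0_norm (ltW Dl0)) in h.
have c11 := fromb _ b11.
have c12 := fromb _ b12.
have c22 := fromb _ b22.
set Nn := p ^+ 2 + q ^+ 2 + r ^+ 2 + s ^+ 2.
set Dd := p * s - q * r.
have hN2 : 2 * `|Dd| <= Nn.
  have h1 : 0 <= (p - s) ^+ 2 + (q + r) ^+ 2 by rewrite addr_ge0 // sqr_ge0.
  have h2 : 0 <= (p + s) ^+ 2 + (r - q) ^+ 2 by rewrite addr_ge0 // sqr_ge0.
  have E1 : (p - s) ^+ 2 + (q + r) ^+ 2 = Nn - 2 * Dd by rewrite /Nn /Dd; ring.
  have E2 : (p + s) ^+ 2 + (r - q) ^+ 2 = Nn + 2 * Dd by rewrite /Nn /Dd; ring.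
  by apply: abs2_le; rewrite -?E1 -?E2.
have hNn0 : 0 <= Nn + 2 * `|Dd| by rewrite addr_ge0 ?mulr_ge0 // /Nn !addr_ge0 // sqr_ge0.
have hu2 : Num.sqrt (Nn + 2 * `|Dd|) ^+ 2 = Nn + 2 * `|Dd| by rewrite sqr_sqrtr.
have hT1 := T_le (normr_ge0 Dd) hN2 (sqrtr_ge0 _) hu2.
rewrite (real_normK (num_real Dd)) in hT1.
have hEF : Nn ^+ 2 - 2 * Dd ^+ 2 - 2 * Nn + 2 = e11 ^+ 2 + 2 * e12 ^+ 2 + e22 ^+ 2.
  by rewrite /Nn /Dd /e11 /e12 /e22; ring.
rewrite hEF in hT1.
have hNe : Nn = e11 + e22 + 2 by rewrite /Nn /e11 /e22; ring.
have hT2 : Nn + 2 - 2 * Num.sqrt (Nn + 2 * `|Dd|) <= e11 + e22 + 4.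
  exact: t2 hNe (sqrtr_ge0 _).
set a := ax / nx.
set b := ay / ny.
set c := az / nz.
have a0 : 0 <= a by rewrite /a divr_ge0 // hax sqrtr_ge0.
have b0 : 0 <= b by rewrite /b divr_ge0 // hay sqrtr_ge0.
have c0 : 0 <= c by rewrite /c divr_ge0 // haz sqrtr_ge0.
set S := (a - 1) ^+ 2 + (b - 1) ^+ 2 + (c - 1) ^+ 2.
have sa := sqr_ge0 (a - 1); have sb := sqr_ge0 (b - 1); have sc := sqr_ge0 (c - 1).
have S0 : 0 <= S by rewrite /S !addr_ge0.
have CK1 := ck1 K0.
have CK2 := ck2 K0.
have haS : (a - 1) ^+ 2 <= S by apply: le3_1.
have hbS : (b - 1) ^+ 2 <= S by apply: le3_2.
have hcS : (c - 1) ^+ 2 <= S by apply: le3_3.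
have L0 : 0 <= L by rewrite /L !addr_ge0.
have e11le : e11 <= L * K by apply: le_trans (ler_norm _) c11.
have e22le : e22 <= L * K by apply: le_trans (ler_norm _) c22.
have [Slt|Sge] := ltP S 1.
  have la : al <= 3 * `|a - 1| by rewrite /al /a; apply: dev_small; [exact: a0 | exact: ltW (le_lt_trans haS Slt)].
  have lb : be <= 3 * `|b - 1| by rewrite /be /b; apply: dev_small; [exact: b0 | exact: ltW (le_lt_trans hbS Slt)].
  have lc : ga <= 3 * `|c - 1| by rewrite /ga /c; apply: dev_small; [exact: c0 | exact: ltW (le_lt_trans hcS Slt)].
  have hL3 : `|L| <= 3 * (`|a - 1| + `|b - 1| + `|c - 1|) by rewrite ger0_norm // /L; exact: lin_L3.
  have hL9 := sq_le_of_abs hL3.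
  have hU : (3 * (`|a - 1| + `|b - 1| + `|c - 1|)) ^+ 2 <= 27 * S.
    have E : 27 * S - (3 * (`|a - 1| + `|b - 1| + `|c - 1|)) ^+ 2 =
      9 * ((`|a - 1| - `|b - 1|) ^+ 2 + (`|b - 1| - `|c - 1|) ^+ 2 + (`|a - 1| - `|c - 1|) ^+ 2).
      rewrite /S -(real_normK (num_real (a - 1))) -(real_normK (num_real (b - 1)))
        -(real_normK (num_real (c - 1))); ring.
    rewrite -subr_ge0 E; apply: mulr_ge0; first exact: ler0n.
    by rewrite !addr_ge0 // sqr_ge0.
  have hL27 : L ^+ 2 <= 27 * S by apply: le_trans hL9 hU.
  have k2 : 0 <= K ^+ 2 by rewrite sqr_ge0.
  have h4 : L ^+ 2 * K ^+ 2 <= 27 * S * K ^+ 2 by rewrite ler_wpM2r.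
  have q11 : e11 ^+ 2 <= L ^+ 2 * K ^+ 2 by rewrite -exprMn; exact: sq_le_of_abs.
  have q12 : e12 ^+ 2 <= L ^+ 2 * K ^+ 2 by rewrite -exprMn; exact: sq_le_of_abs.
  have q22 : e22 ^+ 2 <= L ^+ 2 * K ^+ 2 by rewrite -exprMn; exact: sq_le_of_abs.
  have F : 0 <= (200 * (1 + K) ^+ 2 - 108 * K ^+ 2) * S by rewrite mulr_ge0.
  have E1 : (200 * (1 + K) ^+ 2 - 108 * K ^+ 2) * S = 200 * (1 + K) ^+ 2 * S - 4 * (27 * S * K ^+ 2) by ring.
  rewrite E1 in F; exact: (lin_fin1 hT1 q11 q12 q22 h4 F).
have la := dev_big a.
have lb := dev_big b.
have lc := dev_big c.
have hL11 : L <= 11 * S by rewrite /L /S; exact: lin_L11.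
have h4 : L * K <= 11 * S * K by rewrite ler_wpM2r.
have F : 0 <= (200 * (1 + K) ^+ 2 - (22 * K + 4)) * S by rewrite mulr_ge0.
have E1 : (200 * (1 + K) ^+ 2 - (22 * K + 4)) * S = 200 * (1 + K) ^+ 2 * S - 2 * (11 * S * K) - 4 * S by ring.
rewrite E1 in F; exact: (lin_fin2 hT2 e11le e22le h4 Sge F).
Qed.

End S5.

Section S7.
Variable R : realType.
Lemma fst_cont (p : R * R) : {for p, continuous (fun q : R * R => q.1)}.
Proof. exact: cvg_fst. Qed.
Lemma snd_cont (p : R * R) : {for p, continuous (fun q : R * R => q.2)}.
Proof. exact: cvg_snd. Qed.

Definition Cf (p : R * R) : R :=
  200 * ((1 + (1 + 2 * p.2 + 2 * p.2^-1) * (sin p.1 * sin p.1)^-1) *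
         (1 + (1 + 2 * p.2 + 2 * p.2^-1) * (sin p.1 * sin p.1)^-1)).

Lemma Cf_cont (p : R * R) : 0 < p.1 < pi -> 0 < p.2 -> {for p, continuous Cf}.
Proof.
move=> h1 h2.
have hs : sin p.1 != 0 by rewrite gt_eqF // sin_gt0_pi.
have hsin : {for p, continuous (fun q : R * R => sin q.1)}.
  apply: (continuous_comp (f := fun q : R * R => q.1) (g := sin)); first exact: fst_cont.
  exact: continuous_sin.
have hss : {for p, continuous (fun q : R * R => sin q.1 * sin q.1)} by apply: continuousM.
have hinv : {for p, continuous (fun q : R * R => (sin q.1 * sin q.1)^-1)}.
  by apply: continuousV => //; rewrite mulf_neq0.
have hp2 : {for p, continuous (fun q : R * R => q.2^-1)}.
  by apply: continuousV; [rewrite gt_eqF | exact: snd_cont].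
have hc : forall c : R, {for p, continuous (fun q : R * R => c)} by move=> c; exact: cvg_cst.
have hA : {for p, continuous (fun q : R * R => 1 + (1 + 2 * q.2 + 2 * q.2^-1) * (sin q.1 * sin q.1)^-1)}.
  apply: continuousD; first exact: hc.
  apply: continuousM => //.
  apply: continuousD; last by apply: continuousM.
  apply: continuousD; first exact: hc.
  apply: continuousM; [exact: hc | exact: snd_cont].
rewrite /Cf; apply: continuousM; first exact: hc.
exact: continuousM.
Qed.
End S7.

Section S8.
Variable R : realType.

Lemma Cf_eq (t rr : R) : -1 <= t <= 1 ->
  Cf (acos t, rr) = 200 * (1 + (1 + 2 * rr + 2 / rr) / (1 - t ^+ 2)) ^+ 2.
Proof.
move=> ht.
have h0 : 0 <= 1 - t ^+ 2.
  have : t ^+ 2 <= 1 by rewrite -(expr1n R 2) -real_normK ?num_real // lerXn2r ?nnegrE // ?normr_ge0 // ler_norml.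
  lra.
rewrite /Cf /= sin_acos // -(expr2 (Num.sqrt _)) sqr_sqrtr //.
Qed.

Lemma t_bound (x1 x2 y1 y2 nx ny : R) : nx = Num.sqrt (x1 ^+ 2 + x2 ^+ 2) ->
  ny = Num.sqrt (y1 ^+ 2 + y2 ^+ 2) -> 0 < nx -> 0 < ny ->
  -1 <= (x1 * y1 + x2 * y2) / (nx * ny) <= 1.
Proof.
move=> hnx hny nxp nyp.
have nx2 : nx ^+ 2 = x1 ^+ 2 + x2 ^+ 2 by rewrite hnx sqr_sqrtr // addr_ge0 // sqr_ge0.
have ny2 : ny ^+ 2 = y1 ^+ 2 + y2 ^+ 2 by rewrite hny sqr_sqrtr // addr_ge0 // sqr_ge0.
have h : (x1 * y1 + x2 * y2) ^+ 2 <= (nx * ny) ^+ 2.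
  rewrite exprMn nx2 ny2 -subr_ge0.
  have -> : (x1 ^+ 2 + x2 ^+ 2) * (y1 ^+ 2 + y2 ^+ 2) - (x1 * y1 + x2 * y2) ^+ 2
     = (x1 * y2 - x2 * y1) ^+ 2 by ring.
  exact: sqr_ge0.
have hp : 0 < nx * ny by rewrite mulr_gt0.
rewrite -ler_norml normrM normfV (ger0_norm (ltW hp)).
rewrite ler_pdivrMr // mul1r.
have : Num.sqrt ((x1 * y1 + x2 * y2) ^+ 2) <= Num.sqrt ((nx * ny) ^+ 2) by rewrite ler_sqrt // sqr_ge0.
by rewrite !sqrtr_sqr (ger0_norm (ltW hp)).
Qed.

Lemma vec0 (v : 'cV[R]_2) : v 0 0 = 0 -> v 1 0 = 0 -> v = 0.
Proof.
move=> h0 h1; apply/matrixP => i j; rewrite (ord1 j) mxE.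
case: i => [[|[|//]] hi].
  by rewrite (_ : Ordinal hi = 0) //; apply: val_inj.
by rewrite (_ : Ordinal hi = 1) //; apply: val_inj.
Qed.

Lemma indep_det (x y : 'cV[R]_2) : lin_indep2 x y -> x 0 0 * y 1 0 - x 1 0 * y 0 0 != 0.
Proof.
move=> hind; apply/eqP => hD.
have c : forall a b : R, forall i, (a *: x + b *: y) i 0 = a * x i 0 + b * y i 0.
  by move=> a b i; rewrite !mxE.
have [h1 h2] : y 1 0 = 0 /\ - x 1 0 = 0.
  apply: hind; apply: vec0; rewrite c.
    by rewrite -hD; ring.
  by ring.
have hx1 : x 1 0 = 0 by rewrite -[x 1 0]opprK h2 oppr0.
have [h3 h4] : y 0 0 = 0 /\ - x 0 0 = 0.
  apply: hind; apply: vec0; rewrite c.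
    by ring.
  by rewrite hx1 h1; ring.
have hx0 : x 0 0 = 0 by rewrite -[x 0 0]opprK h4 oppr0.
have [] := hind 1 0.
  rewrite scale1r scale0r addr0; exact: vec0.
move=> /eqP; by rewrite oner_eq0.
Qed.

End S8.

Unset Implicit Arguments.

Theorem lemmaA4 (R : realType) :
  exists C : (R * R)%type -> R,
    (forall p : (R * R)%type, 0 < p.1 < pi -> 0 < p.2 ->
        {for p, continuous C} /\ 0 < C p) /\
    forall x y : 'cV[R]_2, lin_indep2 x y ->
    forall A : 'M[R]_2,
      dist_O A ^+ 2 <=
      C (vangle x y, vnorm y / vnorm x) *
        ((vnorm (A *m x) / vnorm x - 1) ^+ 2
         + (vnorm (A *m y) / vnorm y - 1) ^+ 2
         + (vnorm (A *m (x + y)) / vnorm (x + y) - 1) ^+ 2).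
Proof.
exists (@Cf R); split.
  move=> p hp1 hp2; split; first exact: Cf_cont.
  have hs : 0 < sin p.1 by rewrite sin_gt0_pi.
  have hu : 0 < 1 + (1 + 2 * p.2 + 2 * p.2^-1) * (sin p.1 * sin p.1)^-1.
    apply: (lt_le_trans ltr01); rewrite lerDl.
    apply: mulr_ge0; last by rewrite invr_ge0 mulr_ge0 // ltW.
    apply: addr_ge0; first (apply: addr_ge0; [exact: ler01 | by rewrite mulr_ge0 // ltW]).
    by rewrite mulr_ge0 // invr_ge0 ltW.
  by rewrite /Cf mulr_gt0 // mulr_gt0.
move=> x y hind A.
have hD := indep_det hind.
rewrite /vangle ipE !vnormE !mulE ![(x + y) _ _]mxE.
have nxp : 0 < Num.sqrt (x 0 0 ^+ 2 + x 1 0 ^+ 2).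
  rewrite sqrtr_gt0; apply: sq2_gt0.
  have [h1|h1] := eqVneq (x 0 0) 0; last by apply/orP; left.
  have [h2|h2] := eqVneq (x 1 0) 0; last by apply/orP; right.
  by move: hD; rewrite h1 h2 !mul0r subrr eqxx.
have nyp : 0 < Num.sqrt (y 0 0 ^+ 2 + y 1 0 ^+ 2).
  rewrite sqrtr_gt0; apply: sq2_gt0.
  have [h1|h1] := eqVneq (y 0 0) 0; last by apply/orP; left.
  have [h2|h2] := eqVneq (y 1 0) 0; last by apply/orP; right.
  by move: hD; rewrite h1 h2 !mulr0 subrr eqxx.
rewrite Cf_eq; last exact: t_bound.
apply: le_trans (@dist_coord R A _ _ erefl erefl) _.
apply: (main_real hD erefl erefl erefl erefl erefl erefl erefl).
Qed.
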